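(* There exists $\epsilon_0>0$ such that, for all sufficiently large $a$ and all $\tau\in[0,1]$, every solution $(c,\mu)$ of the slab problem $P_{\tau,a}$ with $c=0$ satisfies $\nu(0)>\epsilon_0$.
   Context: $\Theta=(\theta_{\min},\theta_{\max})$, $0<\theta_{\min}<\theta_{\max}<\infty$, $|\Theta|=\theta_{\max}-\theta_{\min}$, $\alpha,r>0$. For $\tau\in[0,1]$, $g_\tau(\theta)=\theta_{\min}+\tau(\theta-\theta_{\min})$. Slab problem $P_{\tau,a}$: a pair $(c,\mu)$, $c\in\mathbb R$, $\mu\ge0$ of class $C^2$ on $[-a,a]\times\overline\Theta$, with $-c\mu_\xi-g_\tau(\theta)\mu_{\xi\xi}-\alpha\mu_{\theta\theta}=r\mu(1-\nu)$ on $(-a,a)\times\Theta$, $\mu_\theta(\xi,\theta_{\min})=\mu_\theta(\xi,\theta_{\max})=0$, $\mu(-a,\theta)=|\Theta|^{-1}$, $\mu(a,\theta)=0$, where $\nu(\xi)=\int_\Theta\mu(\xi,\theta)d\theta$. *)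

(* Defs.v *)
From Stdlib Require Import Reals Lra.
Open Scope R_scope.

Definition g_tau (thmin tau th : R) : R := thmin + tau * (th - thmin).

Definition in_closed_rect (a thmin thmax x t : R) : Prop :=
  -a <= x <= a /\ thmin <= t <= thmax.

Definition in_open_rect (a thmin thmax x t : R) : Prop :=
  -a < x < a /\ thmin < t < thmax.

Definition cont_on_rect (a thmin thmax : R) (f : R -> R -> R) : Prop :=
  forall x t, in_closed_rect a thmin thmax x t ->
  forall eps, 0 < eps -> exists delta, 0 < delta /\
    forall y s, in_closed_rect a thmin thmax y s ->
      Rabs (y - x) < delta -> Rabs (s - t) < delta ->
      Rabs (f y s - f x t) < eps.

(* mu is C^2 on [-a,a] x [thmin,thmax], with first partials mu_x, mu_t and
   second partials mu_xx, mu_xt (= d/dtheta of mu_x), mu_tx (= d/dxi of mu_t),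
   mu_tt: the partials exist in the open rectangle and, together with mu,
   extend continuously to the closed rectangle (these extensions are the
   given functions). *)
Definition C2_on_rect (a thmin thmax : R)
  (mu mu_x mu_t mu_xx mu_xt mu_tx mu_tt : R -> R -> R) : Prop :=
  (forall x t, in_open_rect a thmin thmax x t ->
     derivable_pt_lim (fun y => mu y t) x (mu_x x t) /\
     derivable_pt_lim (fun s => mu x s) t (mu_t x t) /\
     derivable_pt_lim (fun y => mu_x y t) x (mu_xx x t) /\
     derivable_pt_lim (fun s => mu_x x s) t (mu_xt x t) /\
     derivable_pt_lim (fun y => mu_t y t) x (mu_tx x t) /\
     derivable_pt_lim (fun s => mu_t x s) t (mu_tt x t)) /\
  cont_on_rect a thmin thmax mu /\
  cont_on_rect a thmin thmax mu_x /\ cont_on_rect a thmin thmax mu_t /\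
  cont_on_rect a thmin thmax mu_xx /\ cont_on_rect a thmin thmax mu_xt /\
  cont_on_rect a thmin thmax mu_tx /\ cont_on_rect a thmin thmax mu_tt.

Definition slab_solution (thmin thmax alpha r tau a c : R)
  (mu mu_x mu_t mu_xx mu_xt mu_tx mu_tt : R -> R -> R) (nu : R -> R) : Prop :=
  C2_on_rect a thmin thmax mu mu_x mu_t mu_xx mu_xt mu_tx mu_tt /\
  (forall x t, in_closed_rect a thmin thmax x t -> 0 <= mu x t) /\
  (forall x, -a <= x <= a ->
     forall pr : Riemann_integrable (fun t => mu x t) thmin thmax,
       nu x = RiemannInt pr) /\
  (forall x t, in_open_rect a thmin thmax x t ->
     - c * mu_x x t - g_tau thmin tau t * mu_xx x t - alpha * mu_tt x t
       = r * mu x t * (1 - nu x)) /\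
  (forall x, -a <= x <= a -> mu_t x thmin = 0 /\ mu_t x thmax = 0) /\
  (forall t, thmin <= t <= thmax ->
     mu (-a) t = / (thmax - thmin) /\ mu a t = 0).

(* Main.v *)
Require Import Defs.
From Stdlib Require Import Reals Lra Classical ClassicalEpsilon.
From Coquelicot Require Import Coquelicot.
Open Scope R_scope.

Definition clamp (a b t : R) := Rmax a (Rmin b t).

Lemma clamp_in a b t : a <= b -> a <= clamp a b t <= b.
Proof. intros; unfold clamp, Rmax, Rmin; repeat destruct Rle_dec; lra. Qed.

Lemma clamp_id a b t : a <= t <= b -> clamp a b t = t.
Proof. intros; unfold clamp, Rmax, Rmin; repeat destruct Rle_dec; lra. Qed.

Lemma clamp_lip a b y z : a <= b -> Rabs (clamp a b y - clamp a b z) <= Rabs (y - z).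
Proof.
  intros; unfold clamp, Rmax, Rmin; repeat destruct Rle_dec;
  unfold Rabs; repeat destruct Rcase_abs; lra.
Qed.

Definition relcont (a b : R) (f : R -> R) : Prop :=
  forall z, a <= z <= b -> forall eps, 0 < eps -> exists d, 0 < d /\
    forall y, a <= y <= b -> Rabs (y - z) < d -> Rabs (f y - f z) < eps.

Lemma relcont_clamp a b f : a <= b -> relcont a b f ->
  forall z, continuity_pt (fun t => f (clamp a b t)) z.
Proof.
  intros Hab Hf z eps Heps.
  destruct (Hf (clamp a b z) (clamp_in a b z Hab) eps Heps) as [d [Hd H]].
  exists d; split; auto.
  intros y [_ Hy]. simpl in *. unfold Rdist in *.
  apply H. apply clamp_in; auto.
  eapply Rle_lt_trans. apply clamp_lip; auto. auto.
Qed.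

Lemma cont_clamp_ex_RInt a b F : a <= b ->
  (forall z, continuity_pt (fun t => F (clamp a b t)) z) -> ex_RInt F a b.
Proof.
  intros Hab H.
  apply ex_RInt_ext with (f := fun t => F (clamp a b t)).
  { intros x Hx. rewrite Rmin_left in Hx by lra. rewrite Rmax_right in Hx by lra.
    rewrite clamp_id; auto; lra. }
  apply (ex_RInt_continuous (V:=R_CompleteNormedModule)). intros z _. apply continuity_pt_filterlim. apply H.
Qed.

Lemma relcont_ex_RInt a b f : a <= b -> relcont a b f -> ex_RInt f a b.
Proof. intros. apply cont_clamp_ex_RInt; auto. apply relcont_clamp; auto. Qed.

Lemma relcont_mult_ex_RInt a b f g : a <= b -> relcont a b f -> relcont a b g ->
  ex_RInt (fun t => f t * g t) a b.
Proof. intros. apply cont_clamp_ex_RInt; auto. intros z.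
  apply (continuity_pt_mult (fun t => f (clamp a b t)) (fun t => g (clamp a b t)));
  apply relcont_clamp; auto. Qed.

Lemma RInt_add' f g a b : ex_RInt f a b -> ex_RInt g a b ->
  RInt (fun t => f t + g t) a b = RInt f a b + RInt g a b.
Proof. intros. exact (RInt_plus f g a b H H0). Qed.

Lemma RInt_sub' f g a b : ex_RInt f a b -> ex_RInt g a b ->
  RInt (fun t => f t - g t) a b = RInt f a b - RInt g a b.
Proof. intros. exact (RInt_minus f g a b H H0). Qed.

Lemma RInt_scal' f c a b : ex_RInt f a b ->
  RInt (fun t => c * f t) a b = c * RInt f a b.
Proof. intros. exact (RInt_scal f a b c H). Qed.

Lemma RInt_const' c a b : RInt (fun _ => c) a b = (b - a) * c.
Proof. exact (RInt_const a b c). Qed.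

Lemma ex_RInt_sub' f g a b : ex_RInt f a b -> ex_RInt g a b -> ex_RInt (fun t => f t - g t) a b.
Proof. intros. exact (ex_RInt_minus f g a b H H0). Qed.
Lemma ex_RInt_add' f g a b : ex_RInt f a b -> ex_RInt g a b -> ex_RInt (fun t => f t + g t) a b.
Proof. intros. exact (ex_RInt_plus f g a b H H0). Qed.
Lemma ex_RInt_scal' f c a b : ex_RInt f a b -> ex_RInt (fun t => c * f t) a b.
Proof. intros. exact (ex_RInt_scal f a b c H). Qed.
Lemma ex_RInt_const' (c a b : R) : ex_RInt (V:=R_CompleteNormedModule) (fun _ => c) a b.
Proof. exact (ex_RInt_const a b c). Qed.

Lemma rect_slice a thm thM f y : cont_on_rect a thm thM f -> -a <= y <= a ->
  relcont thm thM (fun t => f y t).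
Proof.
  intros H Hy z Hz eps Heps.
  destruct (H y z (conj Hy Hz) eps Heps) as [d [Hd Hd2]].
  exists d; split; auto. intros t Ht Htz.
  apply Hd2; auto. split; auto. rewrite Rminus_eq_0, Rabs_R0; auto.
Qed.

Lemma relcont_g thm tau : 0 <= tau <= 1 -> forall lo hi, relcont lo hi (g_tau thm tau).
Proof.
  intros Ht lo hi z Hz eps Heps. exists eps; split; auto. intros y _ Hy.
  unfold g_tau.
  replace (thm + tau * (y - thm) - (thm + tau * (z - thm))) with (tau * (y - z)) by ring.
  rewrite Rabs_mult, Rabs_right by lra.
  destruct (Rle_lt_or_eq_dec _ _ (proj1 Ht)).
  - apply Rle_lt_trans with (1 * Rabs (y - z)). apply Rmult_le_compat_r. apply Rabs_pos. lra. lra.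
  - subst. lra.
Qed.

Lemma relcont_minus a b f g : relcont a b f -> relcont a b g -> relcont a b (fun x => f x - g x).
Proof.
  intros Hf Hg z Hz eps Heps.
  destruct (Hf z Hz (eps/2)) as [d1 [Hd1 H1]]. lra.
  destruct (Hg z Hz (eps/2)) as [d2 [Hd2 H2]]. lra.
  exists (Rmin d1 d2); split. apply Rmin_pos; auto.
  intros y Hy Hyz.
  assert (A1 := H1 y Hy (Rlt_le_trans _ _ _ Hyz (Rmin_l _ _))).
  assert (A2 := H2 y Hy (Rlt_le_trans _ _ _ Hyz (Rmin_r _ _))).
  replace (f y - g y - (f z - g z)) with ((f y - f z) - (g y - g z)) by ring.
  eapply Rle_lt_trans. apply Rabs_triang. rewrite Rabs_Ropp. lra.
Qed.

Lemma relcont_of_cont a b f : (forall z, continuity_pt f z) -> relcont a b f.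
Proof.
  intros Hf z Hz eps Heps.
  destruct (Hf z eps Heps) as [d [Hd H]].
  exists d; split; auto. intros y Hy Hyz.
  destruct (Req_dec y z). subst. rewrite Rminus_eq_0, Rabs_R0; auto.
  apply (H y). split. split. exact I. auto. exact Hyz.
Qed.

Lemma unif_t a thm thM f x : thm <= thM -> cont_on_rect a thm thM f -> -a <= x <= a ->
  forall eps, 0 < eps -> exists d, 0 < d /\ forall y t, -a <= y <= a -> thm <= t <= thM ->
    Rabs (y - x) < d -> Rabs (f y t - f x t) < eps.
Proof.
  intros Hth Hf Hx eps Heps.
  assert (Hex : forall t, exists d : posreal, thm <= t <= thM ->
    forall y s, in_closed_rect a thm thM y s -> Rabs (y - x) < d -> Rabs (s - t) < d ->
      Rabs (f y s - f x t) < eps / 2).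
  { intros t. destruct (classic (thm <= t <= thM)) as [Ht | Ht].
    - destruct (Hf x t (conj Hx Ht) (eps/2)) as [d [Hd H]]. lra.
      exists (mkposreal d Hd). intros _. exact H.
    - exists (mkposreal 1 Rlt_0_1). intros; contradiction. }
  set (delta := fun t => proj1_sig (constructive_indefinite_description _ (Hex t))).
  assert (Hdelta : forall t, thm <= t <= thM ->
    forall y s, in_closed_rect a thm thM y s -> Rabs (y - x) < delta t -> Rabs (s - t) < delta t ->
      Rabs (f y s - f x t) < eps / 2).
  { intros t. unfold delta. destruct constructive_indefinite_description; simpl; auto. }
  destruct (compactness_value_1d thm thM delta) as [d Hd].
  exists d; split. apply cond_pos.
  intros y t Hy Ht Hyx.
  apply NNPP. intro Hcon. apply (Hd t Ht). intros [t0 [Ht0 [Htt0 Hdd]]].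
  apply Hcon.
  assert (A1 := Hdelta t0 Ht0 y t (conj Hy Ht) (Rlt_le_trans _ _ _ Hyx Hdd) Htt0).
  assert (A2 := Hdelta t0 Ht0 x t (conj Hx Ht)).
  rewrite Rminus_eq_0, Rabs_R0 in A2. specialize (A2 (cond_pos _) Htt0).
  replace (f y t - f x t) with ((f y t - f x t0) - (f x t - f x t0)) by ring.
  eapply Rle_lt_trans. apply Rabs_triang. rewrite Rabs_Ropp. lra.
Qed.

Lemma ftc_rel (F dF : R -> R) a b : a < b -> relcont a b F -> relcont a b dF ->
  (forall t, a < t < b -> derivable_pt_lim F t (dF t)) -> RInt dF a b = F b - F a.
Proof.
  intros Hab HF HdF HD.
  set (Fc := fun t => F (clamp a b t)). set (dFc := fun t => dF (clamp a b t)).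
  assert (CF : forall z, continuity_pt Fc z) by (apply relcont_clamp; auto; lra).
  assert (CdF : forall z, continuity_pt dFc z) by (apply relcont_clamp; auto; lra).
  assert (Ex : forall u v, ex_RInt dFc u v).
  { intros u v. apply (ex_RInt_continuous (V:=R_CompleteNormedModule)).
    intros z _. apply continuity_pt_filterlim. apply CdF. }
  set (G := fun u => RInt dFc a u).
  assert (DG : forall u, derivable_pt_lim G u (dFc u)).
  { intros u. apply is_derive_Reals. apply (is_derive_RInt (V:=R_NormedModule) dFc G a u).
    exists (mkposreal 1 Rlt_0_1). intros y _. exact (RInt_correct (V:=R_CompleteNormedModule) dFc a y (Ex a y)).
    apply continuity_pt_filterlim. apply CdF. }
  set (K := fun u => Fc u - G u).
  destruct (MVT_gen K a b (fun _ => 0)) as [c [_ Hc]].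
  - rewrite Rmin_left, Rmax_right by lra. intros x Hx.
    replace 0 with (dF x - dFc x).
    2:{ unfold dFc. rewrite clamp_id by lra. ring. }
    apply is_derive_Reals. unfold K. replace (dF x - dFc x) with (dF x - dFc x) by reflexivity.
    apply derivable_pt_lim_minus. 2: apply DG.
    apply is_derive_Reals.
    apply is_derive_ext_loc with F.
    2: apply is_derive_Reals; apply HD; auto.
    assert (Hp : 0 < Rmin (x - a) (b - x)) by (apply Rmin_pos; lra).
    exists (mkposreal _ Hp). intros y Hy. unfold ball in Hy; simpl in Hy.
    unfold AbsRing_ball, abs, minus, plus, opp in Hy; simpl in Hy.
    unfold Fc. rewrite clamp_id; auto.
    assert (Rmin (x-a) (b-x) <= x - a) by apply Rmin_l.
    assert (Rmin (x-a) (b-x) <= b - x) by apply Rmin_r.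
    unfold Rabs in Hy; destruct Rcase_abs in Hy; lra.
  - intros x _. unfold K. apply continuity_pt_minus. apply CF.
    apply derivable_continuous_pt. eexists. apply DG.
  - unfold K, G in Hc. rewrite RInt_point in Hc.
    unfold Fc in Hc. rewrite !clamp_id in Hc by lra.
    replace (RInt dF a b) with (RInt dFc a b).
    + change (@zero R_CompleteNormedModule) with 0 in Hc. lra.
    + apply RInt_ext. intros x Hx. rewrite Rmin_left, Rmax_right in Hx by lra.
      unfold dFc. rewrite clamp_id; auto; lra.
Qed.

Lemma second_diff (f f1 f2 : R -> R) x s M : 0 < s ->
  (forall y, x - s <= y <= x + s -> derivable_pt_lim f y (f1 y) /\ derivable_pt_lim f1 y (f2 y)) ->
  (forall y, x - s <= y <= x + s -> f2 y <= M) ->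
  f (x + s) + f (x - s) - 2 * f x <= M * s ^ 2.
Proof.
  intros Hs HD HM.
  set (q := fun u => f (x + u) + f (x - u) - 2 * f x - M * (u * u)).
  set (q1 := fun u => f1 (x + u) - f1 (x - u) - 2 * M * u).
  set (q2 := fun u => f2 (x + u) + f2 (x - u) - 2 * M).
  assert (Dp : forall (h h1 : R -> R) u, derivable_pt_lim h (x + u) (h1 (x + u)) ->
     derivable_pt_lim (fun v => h (x + v)) u (h1 (x + u))).
  { intros h h1 u H. apply is_derive_Reals. apply is_derive_Reals in H.
    replace (h1 (x+u)) with (scal 1 (h1 (x+u))) by (unfold scal; simpl; unfold mult; simpl; ring).
    apply (is_derive_comp h (fun v => x + v)). auto.
    apply is_derive_Reals. replace 1 with (0 + 1) by ring.
    apply derivable_pt_lim_plus. apply derivable_pt_lim_const. apply derivable_pt_lim_id. }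
  assert (Dm : forall (h h1 : R -> R) u, derivable_pt_lim h (x - u) (h1 (x - u)) ->
     derivable_pt_lim (fun v => h (x - v)) u (- h1 (x - u))).
  { intros h h1 u H. apply is_derive_Reals. apply is_derive_Reals in H.
    replace (- h1 (x-u)) with (scal (-1) (h1 (x-u))) by (unfold scal; simpl; unfold mult; simpl; ring).
    apply (is_derive_comp h (fun v => x - v)). auto.
    apply is_derive_Reals. replace (-1) with (0 - 1) by ring.
    apply derivable_pt_lim_minus. apply derivable_pt_lim_const. apply derivable_pt_lim_id. }
  assert (Dq1 : forall u, 0 <= u <= s -> derivable_pt_lim q1 u (q2 u)).
  { intros u Hu. unfold q1, q2.
    replace (f2 (x + u) + f2 (x - u) - 2 * M) with (f2 (x+u) - (- f2 (x-u)) - 2 * M * 1) by ring.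
    apply derivable_pt_lim_minus. apply derivable_pt_lim_minus.
    apply Dp. apply (HD (x+u)); lra. apply Dm. apply (HD (x-u)); lra.
    apply derivable_pt_lim_scal. apply derivable_pt_lim_id. }
  assert (Dq : forall u, 0 <= u <= s -> derivable_pt_lim q u (q1 u)).
  { intros u Hu. unfold q, q1.
    replace (f1 (x + u) - f1 (x - u) - 2 * M * u) with
      (f1 (x+u) + (- f1 (x-u)) - 0 - M * (1 * u + u * 1)) by ring.
    apply derivable_pt_lim_minus. apply derivable_pt_lim_minus. apply derivable_pt_lim_plus.
    apply Dp. apply (HD (x+u)); lra. apply Dm. apply (HD (x-u)); lra.
    apply derivable_pt_lim_const.
    apply derivable_pt_lim_scal. apply derivable_pt_lim_mult; apply derivable_pt_lim_id. }
  assert (Hq1 : forall u, 0 <= u <= s -> q1 u <= 0).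
  { intros u Hu. destruct (Req_dec u 0).
    { subst. unfold q1. rewrite Rplus_0_r, Rminus_0_r. lra. }
    destruct (MVT_gen q1 0 u q2) as [c [Hc Hc2]].
    - rewrite Rmin_left, Rmax_right by lra. intros y Hy. apply is_derive_Reals, Dq1. lra.
    - rewrite Rmin_left, Rmax_right by lra. intros y Hy.
      apply derivable_continuous_pt. eexists. apply Dq1. lra.
    - rewrite Rmin_left, Rmax_right in Hc by lra.
      assert (q2 c <= 0).
      { unfold q2. assert (HM1 := HM (x + c)). assert (HM2 := HM (x - c)).
        assert (f2 (x+c) <= M) by (apply HM1; lra). assert (f2 (x-c) <= M) by (apply HM2; lra). lra. }
      assert (q1 0 = 0) by (unfold q1; rewrite Rplus_0_r, Rminus_0_r; ring).
      assert (q2 c * (u - 0) <= 0). { apply Rmult_le_0_r; lra. } lra. }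
  destruct (MVT_gen q 0 s q1) as [c [Hc Hc2]].
  - rewrite Rmin_left, Rmax_right by lra. intros y Hy. apply is_derive_Reals, Dq. lra.
  - rewrite Rmin_left, Rmax_right by lra. intros y Hy.
    apply derivable_continuous_pt. eexists. apply Dq. lra.
  - rewrite Rmin_left, Rmax_right in Hc by lra.
    assert (q 0 = 0) by (unfold q; rewrite Rplus_0_r, Rminus_0_r; ring).
    assert (q1 c * (s - 0) <= 0). { apply Rmult_le_0_r. apply Hq1; lra. lra. }
    unfold q in Hc2 at 1. simpl. lra.
Qed.

Theorem lemma3p4 (thmin thmax alpha r : R)
  (Hth0 : 0 < thmin) (Hth : thmin < thmax) (Halpha : 0 < alpha) (Hr : 0 < r) :
  exists eps0, 0 < eps0 /\
  exists a0, forall a, a0 <= a ->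
  forall tau, 0 <= tau <= 1 ->
  forall (c : R) (mu mu_x mu_t mu_xx mu_xt mu_tx mu_tt : R -> R -> R) (nu : R -> R),
    slab_solution thmin thmax alpha r tau a c mu mu_x mu_t mu_xx mu_xt mu_tx mu_tt nu ->
    c = 0 ->
    nu 0 > eps0.
Proof.
  exists (thmin / (8 * thmax)). split. apply Rdiv_lt_0_compat; lra.
  exists 1. intros a Ha tau Htau c mu mu_x mu_t mu_xx mu_xt mu_tx mu_tt nu Hsol Hc. subst c.
  destruct Hsol as [[HD [Cmu [Cmux [Cmut [Cmuxx [_ [_ Cmutt]]]]]]] [Hpos [Hnu [Heq [HBC HDir]]]]].
  set (g := g_tau thmin tau).
  assert (Hg : forall t, thmin <= t <= thmax -> thmin <= g t <= thmax).
  { intros t Ht. unfold g, g_tau. split; nra. }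
  assert (Rg : forall lo hi, relcont lo hi g) by (apply relcont_g; auto).
  assert (Hle : thmin <= thmax) by lra.
  assert (ExM : forall y, -a <= y <= a -> ex_RInt (fun t => mu y t) thmin thmax).
  { intros. apply relcont_ex_RInt; auto. apply rect_slice with a; auto. }
  assert (ExGM : forall y, -a <= y <= a -> ex_RInt (fun t => g t * mu y t) thmin thmax).
  { intros. apply relcont_mult_ex_RInt; auto. apply rect_slice with a; auto. }
  assert (ExG : ex_RInt g thmin thmax) by (apply relcont_ex_RInt; auto).
  assert (Hnu' : forall y, -a <= y <= a -> nu y = RInt (fun t => mu y t) thmin thmax).
  { intros y Hy. rewrite (Hnu y Hy (ex_RInt_Reals_0 _ _ _ (ExM y Hy))). symmetry. apply RInt_Reals. }
  set (w := fun y => RInt (fun t => g t * mu y t) thmin thmax).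
  assert (Hnu_up : forall y, -a <= y <= a -> nu y <= / thmin * w y).
  { intros y Hy. rewrite Hnu' by auto. unfold w. rewrite <- RInt_scal' by auto.
    apply RInt_le; auto. apply ex_RInt_scal with (k := / thmin) (f := fun t => g t * mu y t). auto.
    intros t Ht. assert (Hgt := Hg t (conj (Rlt_le _ _ (proj1 Ht)) (Rlt_le _ _ (proj2 Ht)))).
    assert (0 <= mu y t) by (apply Hpos; split; auto; lra).
    assert (0 < / thmin) by (apply Rinv_0_lt_compat; lra).
    assert (thmin * / thmin = 1) by (field; lra).
    assert (0 <= / thmin * mu y t * (g t - thmin)).
    { apply Rmult_le_pos. apply Rmult_le_pos; lra. lra. }
    nra. }
  assert (Hnu_lo : forall y, -a <= y <= a -> / thmax * w y <= nu y).
  { intros y Hy. rewrite Hnu' by auto. unfold w. rewrite <- RInt_scal' by auto.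
    apply RInt_le; auto. apply ex_RInt_scal with (k := / thmax) (f := fun t => g t * mu y t). auto.
    intros t Ht. assert (Hgt := Hg t (conj (Rlt_le _ _ (proj1 Ht)) (Rlt_le _ _ (proj2 Ht)))).
    assert (0 <= mu y t) by (apply Hpos; split; auto; lra).
    assert (0 < / thmax) by (apply Rinv_0_lt_compat; lra).
    assert (thmax * / thmax = 1) by (field; lra).
    assert (0 <= / thmax * mu y t * (thmax - g t)).
    { apply Rmult_le_pos. apply Rmult_le_pos; lra. lra. }
    nra. }
  assert (Hnu0 : forall y, -a <= y <= a -> 0 <= nu y).
  { intros y Hy. rewrite Hnu' by auto. replace 0 with ((thmax - thmin) * 0) by ring.
    rewrite <- RInt_const'. apply RInt_le; auto. apply ex_RInt_const'.
    intros t Ht. apply Hpos. split; lra. }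
  assert (Hwl : thmin <= w (-a)).
  { apply Rle_trans with ((thmax - thmin) * (thmin / (thmax - thmin))). right; field; lra.
    unfold w. rewrite <- RInt_const'. apply RInt_le; auto. apply ex_RInt_const'. apply ExGM; lra.
    intros t Ht. rewrite (proj1 (HDir t ltac:(lra))).
    assert (Hgt := Hg t (conj (Rlt_le _ _ (proj1 Ht)) (Rlt_le _ _ (proj2 Ht)))).
    unfold Rdiv. apply Rmult_le_compat_r. left; apply Rinv_0_lt_compat; lra. lra. }
  assert (Hwr : w a = 0).
  { unfold w. transitivity (RInt (fun _ => 0) thmin thmax).
    2:{ rewrite RInt_const'. simpl. lra. }
    apply RInt_ext. intros t Ht. rewrite Rmin_left, Rmax_right in Ht by lra.
    rewrite (proj2 (HDir t ltac:(lra))). apply Rmult_0_r. }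
  assert (Rw : relcont (-a) a w).
  { intros z Hz eps Heps.
    set (e' := eps / (2 * (thmax * (thmax - thmin)))).
    assert (He' : 0 < e') by (unfold e'; apply Rdiv_lt_0_compat; nra).
    destruct (unif_t a thmin thmax mu z Hle Cmu Hz e' He') as [d [Hd Hud]].
    exists d; split; auto. intros y Hy Hyz.
    unfold w. rewrite <- RInt_sub' by auto.
    assert (Hb : (thmax - thmin) * (thmax * e') = eps / 2) by (unfold e'; field; nra).
    apply Rabs_def1.
    - apply Rle_lt_trans with ((thmax - thmin) * (thmax * e')). 2: lra.
      rewrite <- RInt_const'. apply RInt_le; auto.
      apply ex_RInt_sub'; auto. apply ex_RInt_const'.
      intros t Ht. assert (Hgt := Hg t (conj (Rlt_le _ _ (proj1 Ht)) (Rlt_le _ _ (proj2 Ht)))).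
      assert (H1 := Hud y t Hy (conj (Rlt_le _ _ (proj1 Ht)) (Rlt_le _ _ (proj2 Ht))) Hyz).
      apply Rabs_def2 in H1. nra.
    - apply Rlt_le_trans with (- ((thmax - thmin) * (thmax * e'))). lra.
      replace (- ((thmax - thmin) * (thmax * e'))) with ((thmax - thmin) * (- (thmax * e'))) by ring.
      rewrite <- RInt_const'. apply RInt_le; auto.
      apply ex_RInt_const'. apply ex_RInt_sub'; auto.
      intros t Ht. assert (Hgt := Hg t (conj (Rlt_le _ _ (proj1 Ht)) (Rlt_le _ _ (proj2 Ht)))).
      assert (H1 := Hud y t Hy (conj (Rlt_le _ _ (proj1 Ht)) (Rlt_le _ _ (proj2 Ht))) Hyz).
      apply Rabs_def2 in H1. nra. }
  set (phi := fun x => thmin * ((a - x) * (a - x)) / (4 * (a * a))).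
  assert (Cphi : forall z, continuity_pt phi z) by (intros; unfold phi; reg).
  set (h := fun x => w x - phi x).
  assert (Rh : relcont (-a) a h) by (apply relcont_minus; auto; apply relcont_of_cont; auto).
  destruct (continuity_ab_min (fun x => h (clamp (-a) a x)) (-a) a ltac:(lra)
    (fun c _ => relcont_clamp (-a) a h ltac:(lra) Rh c)) as [xs [Hmin Hxs]].
  rewrite (clamp_id _ _ xs Hxs) in Hmin.
  assert (Hmin' : forall c, -a <= c <= a -> h xs <= h c).
  { intros c0 Hc0. specialize (Hmin c0 Hc0). rewrite clamp_id in Hmin; auto. }
  assert (Hw0 : thmin / 4 <= w 0).
  { destruct (Rlt_le_dec (w 0) (thmin / 4)) as [Hlt|]; auto. exfalso.
    assert (Hh0 : h 0 < 0).
    { unfold h, phi. replace (thmin * ((a - 0) * (a - 0)) / (4 * (a * a))) with (thmin / 4)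
        by (field; lra). lra. }
    assert (Hhxs : h xs < 0) by (assert (h xs <= h 0) by (apply Hmin'; lra); lra).
    assert (Hhl : 0 <= h (-a)).
    { unfold h, phi. replace (thmin * ((a - - a) * (a - - a)) / (4 * (a * a))) with thmin
        by (field; lra). lra. }
    assert (Hhr : h a = 0).
    { unfold h, phi. rewrite Hwr. unfold Rdiv. ring. }
    assert (Hxs' : -a < xs < a).
    { split; destruct (Req_dec xs (-a)); destruct (Req_dec xs a); subst; try lra.
      all: try (rewrite H in Hhxs; lra); try (rewrite H0 in Hhxs; lra). }
    assert (Hphi1 : phi xs <= thmin).
    { unfold phi. apply Rmult_le_reg_r with (4 * (a * a)). nra.
      unfold Rdiv. rewrite Rmult_assoc, Rinv_l by nra.
      assert ((a-xs)*(a-xs) <= 4*(a*a)) by nra.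
      rewrite Rmult_1_r. apply Rmult_le_compat_l; lra. }
    assert (Hnu1 : nu xs < 1).
    { assert (H1 := Hnu_up xs ltac:(lra)).
      assert (w xs < thmin) by (unfold h in Hhxs; lra).
      assert (/ thmin * w xs < / thmin * thmin).
      { apply Rmult_lt_compat_l; auto. apply Rinv_0_lt_compat; lra. }
      rewrite Rinv_l in H0 by lra. lra. }
    assert (Hnu2 : 0 <= nu xs) by (apply Hnu0; lra).
    set (eps1 := thmin / (4 * (a * a) * (thmax * (thmax - thmin)))).
    assert (He1 : 0 < eps1) by (unfold eps1; apply Rdiv_lt_0_compat; [lra|];
      apply Rmult_lt_0_compat; [nra|apply Rmult_lt_0_compat; lra]).
    destruct (unif_t a thmin thmax mu_xx xs Hle Cmuxx ltac:(lra) eps1 He1) as [d [Hd Hud]].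
    set (s := Rmin (d / 2) (Rmin ((a - xs) / 2) ((xs + a) / 2))).
    assert (Hs1 : s <= d / 2) by apply Rmin_l.
    assert (Hs2 : s <= (a - xs) / 2) by (eapply Rle_trans; [apply Rmin_r | apply Rmin_l]).
    assert (Hs3 : s <= (xs + a) / 2) by (eapply Rle_trans; [apply Rmin_r | apply Rmin_r]).
    assert (Hs0 : 0 < s) by (apply Rmin_pos; [lra | apply Rmin_pos; lra]).
    assert (Hpt : forall t, thmin < t < thmax ->
      mu (xs + s) t + mu (xs - s) t - 2 * mu xs t <= (mu_xx xs t + eps1) * s ^ 2).
    { intros t Ht.
      apply (second_diff (fun y => mu y t) (fun y => mu_x y t) (fun y => mu_xx y t)); auto.
      - intros y Hy. destruct (HD y t) as [D1 [_ [D3 _]]]. split; [lra | auto].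
        split; auto.
      - intros y Hy. assert (Habs : Rabs (y - xs) < d).
        { unfold Rabs; destruct Rcase_abs; lra. }
        assert (H1 := Hud y t ltac:(lra) ltac:(lra) Habs). apply Rabs_def2 in H1. lra. }
    assert (ExXX : ex_RInt (fun t => g t * mu_xx xs t) thmin thmax).
    { apply relcont_mult_ex_RInt; auto. apply rect_slice with a; auto; lra. }
    assert (ExTT : ex_RInt (fun t => mu_tt xs t) thmin thmax).
    { apply relcont_ex_RInt; auto. apply rect_slice with a; auto; lra. }
    assert (ExM0 := ExM xs ltac:(lra)).
    assert (Hup : w (xs + s) + w (xs - s) - 2 * w xs <=
       s ^ 2 * RInt (fun t => g t * mu_xx xs t) thmin thmax + s ^ 2 * eps1 * RInt g thmin thmax).
    { unfold w. rewrite <- (RInt_scal' (fun t => g t * mu xs t)) by (apply ExGM; lra).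
      rewrite <- RInt_add' by (apply ExGM; lra).
      rewrite <- RInt_sub'.
      2: apply ex_RInt_add'; apply ExGM; lra.
      2: apply ex_RInt_scal'; apply ExGM; lra.
      rewrite <- (RInt_scal' (fun t => g t * mu_xx xs t)) by auto.
      rewrite <- (RInt_scal' g) by auto.
      rewrite <- RInt_add'.
      2: apply ex_RInt_scal'; auto. 2: apply ex_RInt_scal'; auto.
      apply RInt_le; auto.
      - apply ex_RInt_sub'. apply ex_RInt_add'; apply ExGM; lra. apply ex_RInt_scal'; apply ExGM; lra.
      - apply ex_RInt_add'; apply ex_RInt_scal'; auto.
      - intros t Ht. assert (Hgt := Hg t (conj (Rlt_le _ _ (proj1 Ht)) (Rlt_le _ _ (proj2 Ht)))).
        assert (H1 := Hpt t Ht).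
        assert (g t * (mu (xs + s) t + mu (xs - s) t - 2 * mu xs t) <= g t * ((mu_xx xs t + eps1) * s ^ 2)).
        { apply Rmult_le_compat_l; lra. }
        lra. }
    assert (HI2 : RInt (fun t => g t * mu_xx xs t) thmin thmax =
                  - alpha * RInt (fun t => mu_tt xs t) thmin thmax - r * (1 - nu xs) * nu xs).
    { rewrite (Hnu' xs) by lra.
      rewrite <- (RInt_scal' (fun t => mu_tt xs t)) by auto.
      rewrite <- (RInt_scal' (fun t => mu xs t)) by auto.
      rewrite <- RInt_sub'.
      2: apply ex_RInt_scal'; auto. 2: apply ex_RInt_scal'; auto.
      apply RInt_ext. intros t Ht. rewrite Rmin_left, Rmax_right in Ht by lra.
      assert (H1 := Heq xs t (conj Hxs' Ht)). fold g in H1. rewrite (Hnu' xs) in H1 by lra. nra. }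
    assert (HTT : RInt (fun t => mu_tt xs t) thmin thmax = 0).
    { rewrite (ftc_rel (fun t => mu_t xs t) (fun t => mu_tt xs t) thmin thmax Hth).
      - destruct (HBC xs ltac:(lra)) as [B1 B2]. rewrite B1, B2. apply Rminus_eq_0.
      - apply rect_slice with a; auto; lra.
      - apply rect_slice with a; auto; lra.
      - intros t Ht. apply (HD xs t (conj Hxs' Ht)). }
    assert (HIg : RInt g thmin thmax <= (thmax - thmin) * thmax).
    { rewrite <- RInt_const'. apply RInt_le; auto. apply ex_RInt_const'.
      intros t Ht. apply (Hg t). lra. }
    assert (Hlow : phi (xs + s) + phi (xs - s) - 2 * phi xs <= w (xs + s) + w (xs - s) - 2 * w xs).
    { assert (A1 := Hmin' (xs + s) ltac:(lra)). assert (A2 := Hmin' (xs - s) ltac:(lra)).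
      unfold h in A1, A2. lra. }
    assert (Hphi : phi (xs + s) + phi (xs - s) - 2 * phi xs = thmin * s ^ 2 / (2 * (a * a))).
    { unfold phi. field. lra. }
    rewrite HI2, HTT, Hphi in *.
    assert (Hs2p : 0 < s ^ 2) by (apply pow_lt; auto).
    assert (E1 : eps1 * ((thmax - thmin) * thmax) = thmin / (4 * (a * a))) by (unfold eps1; field; nra).
    assert (E2 : s ^ 2 * eps1 * RInt g thmin thmax <= s ^ 2 * (thmin / (4 * (a * a)))).
    { rewrite <- E1. rewrite Rmult_assoc. apply Rmult_le_compat_l. lra.
      apply Rmult_le_compat_l; lra. }
    assert (E3 : 0 <= s ^ 2 * (r * (1 - nu xs) * nu xs)).
    { apply Rmult_le_pos. lra. apply Rmult_le_pos; [apply Rmult_le_pos|]; lra. }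
    assert (E4 : thmin * s ^ 2 / (2 * (a * a)) = 2 * (s ^ 2 * (thmin / (4 * (a * a))))) by (field; lra).
    assert (E5 : 0 < s ^ 2 * (thmin / (4 * (a * a)))).
    { apply Rmult_lt_0_compat; auto. apply Rdiv_lt_0_compat; nra. }
    nra. }
  assert (H1 := Hnu_lo 0 ltac:(lra)).
  assert (/ thmax * (thmin / 4) <= / thmax * w 0).
  { apply Rmult_le_compat_l; auto. left; apply Rinv_0_lt_compat; lra. }
  assert (thmin / (8 * thmax) < / thmax * (thmin / 4)).
  { replace (/ thmax * (thmin / 4)) with (2 * (thmin / (8 * thmax))) by (field; lra).
    assert (0 < thmin / (8 * thmax)) by (apply Rdiv_lt_0_compat; lra). lra. }
  lra.
Qed.
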